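(* If an additive integrator map $\psi$ is $N$-affine equivariant, then the partitioned integrator map defined by $\phi(f)=\psi(f^{[1]},\ldots,f^{[N]})$ is P-affine equivariant.
   Context: All spaces are real Banach spaces; $\mathfrak X(Y)$ denotes smooth vector fields on $Y$. For fixed $N$, an additive integrator map $\psi$ is a collection of smooth maps $\psi_Y\colon\mathfrak X(Y)^N\to\mathfrak X(Y)$, one per Banach space $Y$. It is $N$-affine equivariant if for every affine map $A$ between Banach spaces, $f^{[\nu]}\sim_A g^{[\nu]}$ for all $\nu$ implies $\psi(f^{[1]},\ldots,f^{[N]})\sim_A\psi(g^{[1]},\ldots,g^{[N]})$, where $f\sim_\chi g$ means $\chi'(y)f(y)=g(\chi(y))$ for all $y$. A partitioned Banach space is $Y=Y^{[1]}\oplus\cdots\oplus Y^{[N]}$; for $f\in\mathfrak X(Y)$, $f^{[\nu]}$ denotes the vector field on $Y$ obtained by keeping only the $Y^{[\nu]}$-component of $f$, so $f=f^{[1]}+\cdots+f^{[N]}$ is uniquely determined by the partition. A partitioned integrator map is a collection of smooth maps $\phi\colon\mathfrak X(Y)\to\mathfrak X(Y)$, one for each partitioned Banach space. A map $A\colon Y\to U$ between partitioned spaces is P-affine if $A=\bigoplus_\nu A^{[\nu]}$ with each $A^{[\nu]}\colon Y^{[\nu]}\to U^{[\nu]}$ affine; a partitioned integrator map is P-affine equivariant if $f\sim_A g$ implies $\phi(f)\sim_A\phi(g)$ for all P-affine $A$. *)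

(* Defs.v *)
From HB Require Import structures.
From mathcomp Require Import all_boot all_order all_algebra.
From mathcomp Require Import all_classical all_reals all_analysis.
Set Implicit Arguments. Unset Strict Implicit. Unset Printing Implicit Defensive.
Import Order.TTheory GRing.Theory Num.Theory.
Import numFieldNormedType.Exports.
Local Open Scope ring_scope.

Section Defs.
Variable R : realType.

Definition iterD (V W : normedModType R) (f : V -> W) (vs : seq V) : V -> W :=
  foldr (fun v g => fun x => derive g x v) f vs.

(* Smoothness (C^infinity) in the Michal--Bastiani sense: all iterated
   directional derivatives exist and (x, v1, ..., vk) |-> d^k f(x)(v1..vk) is
   jointly continuous.  On Banach spaces this coincides with Frechet C^infinity. *)
Definition smooth (V W : normedModType R) (f : V -> W) : Prop :=
  forall vs : seq V,
    (forall x v, derivable (iterD f vs) x v) /\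
    (forall x (e : R), 0 < e -> exists2 d : R, 0 < d &
       forall x' (ws : seq V), size ws = size vs -> `|x - x'| < d ->
         (forall i, (i < size vs)%N -> `|nth 0 vs i - nth 0 ws i| < d) ->
         `|iterD f vs x - iterD f ws x'| < e).

Definition is_affine (V W : normedModType R) (A : V -> W) : Prop :=
  exists (L : {linear V -> W}) (b : W), continuous L /\ forall y, A y = L y + b.

Definition related (V W : normedModType R) (chi : V -> W) (f : V -> V) (g : W -> W)
  : Prop := forall y, 'd chi y (f y) = g (chi y).

Definition additive_integrator (N : nat) :=
  forall Y : completeNormedModType R, ('I_N -> Y -> Y) -> Y -> Y.

Definition N_affine_equivariant (N : nat) (psi : additive_integrator N) : Prop :=
  forall (Y U : completeNormedModType R) (A : Y -> U), is_affine A ->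
  forall (f : 'I_N -> Y -> Y) (g : 'I_N -> U -> U),
    (forall nu, smooth (f nu)) -> (forall nu, smooth (g nu)) ->
    (forall nu, related A (f nu) (g nu)) ->
    related A (psi Y f) (psi U g).

(* A partition Y = Y^[1] (+) ... (+) Y^[N] of a Banach space, given by the
   continuous projections P_nu onto Y^[nu] along the other summands. *)
Record partition (N : nat) (Y : completeNormedModType R) := Partition {
  pproj : 'I_N -> {linear Y -> Y};
  pproj_cont : forall nu, continuous (pproj nu);
  pproj_sum : forall y, \sum_(nu < N) pproj nu y = y;
  pproj_orth : forall nu mu y,
    pproj nu (pproj mu y) = if nu == mu then pproj mu y else 0
}.

Definition component (N : nat) (Y : completeNormedModType R) (pY : partition N Y)
  (f : Y -> Y) (nu : 'I_N) : Y -> Y := fun y => pproj pY nu (f y).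

(* A = (+)_nu A^[nu], A^[nu] : Y^[nu] -> U^[nu] affine.  A^[nu] is represented
   by an affine map B nu : Y -> U with values in U^[nu], restricted to Y^[nu]. *)
Definition P_affine (N : nat) (Y U : completeNormedModType R)
  (pY : partition N Y) (pU : partition N U) (A : Y -> U) : Prop :=
  exists B : 'I_N -> Y -> U,
    (forall nu, is_affine (B nu)) /\
    (forall nu y, pproj pU nu (B nu y) = B nu y) /\
    (forall y, A y = \sum_(nu < N) B nu (pproj pY nu y)).

Definition partitioned_of (N : nat) (psi : additive_integrator N)
  (Y : completeNormedModType R) (pY : partition N Y) (f : Y -> Y) : Y -> Y :=
  psi Y (component pY f).

Definition P_affine_equivariant (N : nat)
  (phi : forall Y : completeNormedModType R, partition N Y -> (Y -> Y) -> Y -> Y)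
  : Prop :=
  forall (Y U : completeNormedModType R) (pY : partition N Y) (pU : partition N U)
    (A : Y -> U), P_affine pY pU A ->
  forall (f : Y -> Y) (g : U -> U), smooth f -> smooth g ->
    related A f g -> related A (phi Y pY f) (phi U pU g).

End Defs.

(* Main.v *)
Require Import Defs.
From HB Require Import structures.
From mathcomp Require Import all_boot all_order all_algebra.
From mathcomp Require Import all_classical all_reals all_analysis.
Set Implicit Arguments. Unset Strict Implicit. Unset Printing Implicit Defensive.
Import Order.TTheory GRing.Theory Num.Theory.
Import numFieldNormedType.Exports.
Local Open Scope classical_set_scope.
Local Open Scope ring_scope.

Section Helpers.
Variable R : realType.

Lemma der_lin (V W X : normedModType R) (P : {linear W -> X}) (Pc : continuous P)
  (h : V -> W) x v : derivable h x v ->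
  derivable (P \o h) x v /\ derive (P \o h) x v = P (derive h x v).
Proof.
move=> dh.
have E : (fun t : R => t^-1 *: (((P \o h) \o shift x) (t *: v) - (P \o h) x)) =
   P \o (fun t : R => t^-1 *: ((h \o shift x) (t *: v) - h x)).
  apply: boolp.funext => t /=; rewrite linearZZ; congr (_ *: _); symmetry; apply: raddfB.
have C : (fun t : R => t^-1 *: (((P \o h) \o shift x) (t *: v) - (P \o h) x))
    @ 0^' --> P (derive h x v).
  rewrite E; apply: continuous_cvg; first exact: Pc.
  exact: dh.
split; first by apply/cvg_ex; eexists; exact: C.
exact: cvg_lim C.
Qed.

Lemma iterD_lin (V W : normedModType R) (P : {linear W -> W}) (Pc : continuous P)
  (h : V -> W) : smooth h -> forall vs, Defs.iterD (P \o h) vs = P \o Defs.iterD h vs.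
Proof.
move=> sh; elim=> [//|v vs IH] /=.
apply: boolp.funext => x /=; rewrite IH.
by have [_ ->] := der_lin Pc (proj1 (sh vs) x v).
Qed.

Lemma smooth_lin (V W : normedModType R) (P : {linear W -> W}) (Pc : continuous P)
  (h : V -> W) : smooth h -> smooth (P \o h).
Proof.
move=> sh vs; rewrite !iterD_lin //; split.
  by move=> x v; have [] := der_lin Pc (proj1 (sh vs) x v).
move=> x e e0.
have [k k0 hk] := linear_lipschitz Pc.
have [d d0 hd] := proj2 (sh vs) x (e / k) (divr_gt0 e0 k0).
exists d => // x' ws sz dx dws.
rewrite !iterD_lin //= -linearB.
apply: (le_lt_trans (hk _)).
rewrite -ltr_pdivlMl // mulrC.
exact: hd.
Qed.

End Helpers.

Theorem proposition4p14 (R : realType) (N : nat) (psi : additive_integrator R N) :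
  N_affine_equivariant psi ->
  P_affine_equivariant (@partitioned_of R N psi).
Proof.
move=> Heq Y U pY pU A [B [hBaff [hBproj hA]]] f g sf sg hrel.
rewrite /partitioned_of.
have hB' : forall nu, {p : {linear Y -> U} * U |
    continuous p.1 /\ forall y, B nu y = p.1 y + p.2}.
  move=> nu; apply: boolp.cid.
  by have [L [b [c e]]] := hBaff nu; exists (L, b).
pose Lb := fun nu => sval (hB' nu).
have hLb : forall nu, continuous (Lb nu).1 /\ forall y, B nu y = (Lb nu).1 y + (Lb nu).2.
  by move=> nu; exact: (svalP (hB' nu)).
pose L := fun nu => (Lb nu).1.
pose b := fun nu => (Lb nu).2.
pose Lsum := fun y : Y => \sum_(nu < N) L nu (pproj pY nu y).
have Llin : linear Lsum.
  move=> a y z; rewrite /Lsum scaler_sumr -big_split /=.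
  by apply: eq_bigr => nu _; rewrite !linearP.
pose LlM := GRing.isLinear.Build _ _ _ _ _ Llin.
pose LL : {linear Y -> U} := HB.pack Lsum LlM.
have LLE : forall w, LL w = \sum_(mu < N) L mu (pproj pY mu w) by [].
have LLc : continuous LL.
  move=> y.
  have -> : (LL : Y -> U) = \sum_(mu < N) (fun w => L mu (pproj pY mu w)).
    by rewrite fct_sumE; apply: boolp.funext => w; rewrite LLE.
  elim/big_ind: _ => //.
  - exact: cst_continuous.
  - by move=> f1 f2 c1 c2; apply: continuousD.
  - move=> mu _; apply: continuous_comp; first exact: pproj_cont.
    exact: (proj1 (hLb mu)).
have Aeq : forall y, A y = LL y + \sum_(nu < N) b nu.
  move=> y; rewrite hA LLE -big_split /=.
  by apply: eq_bigr => nu _; rewrite (proj2 (hLb nu)).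
have dA : forall y, 'd A y = LL :> (Y -> U).
  move=> y.
  have -> : A = (LL : Y -> U) + cst (\sum_(nu < N) b nu).
    by apply: boolp.funext => w; rewrite Aeq.
  rewrite diffD ?diff_lin ?diff_cst //.
  - by apply: boolp.funext => w /=; rewrite addr0.
  - exact: linear_differentiable.
have key1 : forall mu w, pproj pU mu (L mu w) = L mu w.
  move=> mu w.
  have h0 := hBproj mu 0; have hw := hBproj mu w.
  rewrite !(proj2 (hLb mu)) in h0 hw.
  rewrite -/(L mu) -/(b mu) in h0 hw.
  rewrite linear0 add0r in h0.
  by move: hw; rewrite linearD h0 => /addIr.
have key : forall nu mu w,
    pproj pU nu (L mu w) = if nu == mu then L mu w else 0.
  by move=> nu mu w; rewrite -key1 pproj_orth key1.
apply: Heq.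
- exists LL, (\sum_(nu < N) b nu); split => //.
- move=> nu; exact (smooth_lin (@pproj_cont _ _ _ pY nu) sf).
- move=> nu; exact (smooth_lin (@pproj_cont _ _ _ pU nu) sg).
- move=> nu y; rewrite /component dA.
  rewrite -[g (A y)]hrel dA !LLE linear_sum /=.
  rewrite (bigD1 nu) //= big1 ?addr0; last first.
    by move=> mu /negbTE ne; rewrite pproj_orth ne linear0.
  rewrite (bigD1 nu) //= big1 ?addr0; last first.
    by move=> mu /negbTE ne; rewrite key eq_sym ne.
  by rewrite pproj_orth eqxx key eqxx.
Qed.
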